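(* Let $\alpha\in(0,1)$ be an irrational number with bounded partial quotients, and let $s_\alpha$ be a Sturmian word of angle $\alpha$. Then there exists a positive constant $C$ such that for every sufficiently large $n$, $\sum_{m\le n}\mathit{ASF}_{s_\alpha}(m)\ge Cn^2$.
   Context: Alphabet $\{a,b\}$; $\{x\}=x-\lfloor x\rfloor$. For irrational $\alpha\in(0,1)$ and $\rho\in[0,1)$, the Sturmian word $s_{\alpha,\rho}=c_0c_1\cdots$ has $c_m=b$ if $\{\rho+m\alpha\}\in[0,1-\alpha)$ and $c_m=a$ otherwise (or with intervals $(0,1-\alpha]$ and $(1-\alpha,1]$); all these have the same set of factors, and $s_\alpha$ denotes any of them. $\alpha$ has bounded partial quotients if the sequence $(a_i)$ of its simple continued fraction expansion $\alpha=[a_0;a_1,a_2,\dots]$ is bounded. An abelian square is a word $v_1v_2$ with $v_1,v_2$ having the same numbers of each letter; $\mathit{ASF}_w(m)$ is the number of distinct factors of $w$ of length $m$ that are abelian squares. *)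

(* Defs.v *)
From HB Require Import structures.
From mathcomp Require Import all_boot all_order all_algebra.
From mathcomp Require Import boolp reals.
Set Implicit Arguments. Unset Strict Implicit. Unset Printing Implicit Defensive.
Import Order.TTheory GRing.Theory Num.Theory.
Local Open Scope ring_scope.

Definition letter := bool.
Definition la : letter := false.
Definition lb : letter := true.

Definition frac {R : realType} (x : R) : R := x - (Num.floor x)%:~R.

Fixpoint cf_rem {R : realType} (alpha : R) (i : nat) : R :=
  match i with
  | 0 => alpha
  | i'.+1 => frac (cf_rem alpha i')^-1
  end.

Definition partial_quotient {R : realType} (alpha : R) (i : nat) : int :=
  match i with
  | 0 => Num.floor alpha
  | i'.+1 => Num.floor (cf_rem alpha i')^-1
  end.

Definition bounded_partial_quotients {R : realType} (alpha : R) : Prop :=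
  exists B : int, forall i, partial_quotient alpha i <= B.

Definition sturmian {R : realType} (alpha rho : R) (conv : bool) (m : nat) : letter :=
  let x := frac (rho + m%:R * alpha) in
  if conv then asbool ((0 < x) && (x <= 1 - alpha))
  else asbool ((0 <= x) && (x < 1 - alpha)).

Definition is_factor (w : nat -> letter) (u : seq letter) : Prop :=
  exists i : nat, u = [seq w (i + j)%N | j <- iota 0 (size u)].

Definition abelian_square (u : seq letter) : Prop :=
  exists v1 v2 : seq letter, u = v1 ++ v2 /\ forall c : letter, count_mem c v1 = count_mem c v2.

Definition ASF (w : nat -> letter) (m : nat) : nat :=
  #|[set t : m.-tuple letter | asbool (is_factor w t /\ abelian_square t)]|.

(* Main.v *)
Require Import Defs.
From HB Require Import structures.
From mathcomp Require Import all_boot all_order all_algebra.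
From mathcomp Require Import boolp reals.
From mathcomp Require Import ring lra zify.
Import Order.TTheory GRing.Theory Num.Theory.
Local Open Scope ring_scope.
Set Implicit Arguments. Unset Strict Implicit.

Record St (R : Type) := mkSt { t0 : R; t1 : R; q0 : int; q1 : int; p0 : int; p1 : int }.

Section CF.
Variable (R : realType) (alpha : R).
Hypothesis a01 : 0 < alpha < 1.
Hypothesis irr : irrational alpha.

Fixpoint st (n : nat) : St R :=
  match n with
  | 0 => mkSt 1 alpha 0 1 1 0
  | n'.+1 => let s := st n' in let a := Num.floor (t0 s / t1 s) in
     mkSt (t1 s) (t0 s - a%:~R * t1 s) (q1 s) (q0 s + a * q1 s) (p1 s) (p0 s + a * p1 s)
  end.

Definition aq n := Num.floor (t0 (st n) / t1 (st n)).

Lemma st_sign n : exists sg : R, (sg = 1 \/ sg = -1) /\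
  (q0 (st n))%:~R * alpha - (p0 (st n))%:~R = sg * t0 (st n) /\
  (q1 (st n))%:~R * alpha - (p1 (st n))%:~R = - sg * t1 (st n).
Proof.
elim: n => [|n [sg [Hs [E0 E1]]]].
  exists (-1); split; first by right. by rewrite /=; split; lra.
exists (- sg); split; first by case: Hs => ->; [right|left]; rewrite ?opprK.
rewrite /=; split; first by rewrite E1.
rewrite !rmorphD !rmorphM /=.
set a := (Num.floor _)%:~R.
have -> : ((q0 (st n))%:~R + a * (q1 (st n))%:~R) * alpha - ((p0 (st n))%:~R + a * (p1 (st n))%:~R)
  = ((q0 (st n))%:~R * alpha - (p0 (st n))%:~R) + a * ((q1 (st n))%:~R * alpha - (p1 (st n))%:~R) by ring.
rewrite E0 E1; ring.
Qed.

Lemma st_det n : t0 (st n) * (q1 (st n))%:~R + t1 (st n) * (q0 (st n))%:~R = 1.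
Proof.
elim: n => [|n IH] /=; first by rewrite mulr1 mulr0 addr0.
rewrite !rmorphD !rmorphM /=; rewrite -[RHS]IH; ring.
Qed.

Lemma st_pos n : [/\ 0 < t1 (st n) < t0 (st n), (1 <= q1 (st n))%R, (0 <= q0 (st n))%R,
   (q0 (st n) <= q1 (st n))%R & ((n.+1)%:Z <= q0 (st n) + q1 (st n))%R].
Proof.
elim: n => [|n [/andP[h1 h2] h3 h4 h5 h6]] /=.
  by split => //; lra.
set a := Num.floor _.
have ha : (a%:~R <= t0 (st n) / t1 (st n) < (a + 1)%:~R) by exact: floor_itv.
have a1 : (1 <= a)%R.
  by rewrite floor_ge_int ler_pdivlMr // mul1r ltW.
have t1'0 : 0 <= t0 (st n) - a%:~R * t1 (st n).
  case/andP: ha => ha _; move: ha; rewrite ler_pdivlMr // => ha; lra.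
have t1'1 : t0 (st n) - a%:~R * t1 (st n) < t1 (st n).
  case/andP: ha => _; rewrite ltr_pdivrMr // rmorphD /= => hb; lra.
have q1' : (1 <= q0 (st n) + a * q1 (st n))%R by nia.
split => //; last by nia.
  rewrite t1'1 andbT lt0r t1'0 andbT.
  apply/eqP => E.
  have [sg [_ [_ E1]]] := st_sign n.+1.
  rewrite /= -/a E mulr0 in E1.
  apply: irr; apply/rationalP.
  exists (p0 (st n) + a * p1 (st n)), (absz (q0 (st n) + a * q1 (st n))%R).
  rewrite natr_absz ger0_norm; last by lia.
  have qn0 : ((q0 (st n) + a * q1 (st n))%:~R : R) != 0 by rewrite intr_eq0; lia.
  apply: (mulIf qn0); rewrite mulfVK //; lra.
 by nia.
nia.
Qed.


Lemma cf_link n : cf_rem alpha n = t1 (st n) / t0 (st n).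
Proof.
elim: n => [|n IH] /=; first by rewrite divr1.
have [/andP[h1 h2] _ _ _ _] := st_pos n.
rewrite IH invf_div /Defs.frac.
have h1' : t1 (st n) != 0 by rewrite gt_eqF.
by rewrite mulrBl mulfK.
Qed.

Lemma aq_bound : bounded_partial_quotients alpha -> 
  exists Bn : nat, forall n, (aq n <= Bn%:Z)%R.
Proof.
move=> [b Hb]; exists (absz b) => n.
have := Hb n.+1; rewrite /= cf_link invf_div -/(aq n) => h.
apply: (le_trans h); lia.
Qed.

End CF.
Section Hits.
Variable (R : realType) (alpha : R).

Definition hits (N : nat) (L : R) := forall a : R, exists j : nat, (j < N)%N /\
  exists z : int, a <= j%:R * alpha + z%:~R < a + L.

Lemma shiftE (j t q : nat) (z p : int) :
  (j + t * q)%:R * alpha + (z - t%:Z * p)%:~R =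
  j%:R * alpha + z%:~R + t%:R * (q%:R * alpha - p%:~R).
Proof. rewrite natrD natrM rmorphB rmorphM /= -[(t%:Z)%:~R]/(t%:R) ; ring. Qed.

Lemma hits_step N L (q : nat) (p : int) (d : R) (m : nat) :
  hits N L -> 0 < d -> (q%:R * alpha - p%:~R = d \/ q%:R * alpha - p%:~R = - d) ->
  (m.+1)%:R * d <= L -> hits (N + m * q) (L - m%:R * d).
Proof.
move=> H d0 Hq HL a.
have hN j t : (j < N)%N -> (t <= m)%N -> (j + t * q < N + m * q)%N.
  by move=> h1 h2; rewrite -addSn; apply: leq_add h1 (leq_mul h2 (leqnn q)).
case: Hq => Hq.
- have [j [hj [z /andP[hz1 hz2]]]] := H (a - m%:R * d).
  set s := j%:R * alpha + z%:~R - (a - m%:R * d).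
  have s0 : 0 <= s by rewrite /s; lra.
  have sL : s < L by rewrite /s; lra.
  have /andP[u1 u2] := truncn_itv (divr_ge0 s0 (ltW d0)).
  set u := Num.trunc (s / d) in u1 u2 *.
  rewrite ler_pdivlMr // in u1; rewrite ltr_pdivrMr // in u2.
  have [smd|smd] := lerP (m%:R * d) s.
    exists j; split; first by rewrite ltn_addr.
    exists z; apply/andP; split; rewrite /s in smd; lra.
  have um : (u < m)%N by rewrite -(ltr_nat R); rewrite -(ltr_pM2r d0); lra.
  exists (j + (m - u) * q)%N; split; first exact: hN (leq_subr _ _).
  exists (z - (m - u)%N%:Z * p); rewrite shiftE Hq natrB ?(ltnW um) //.
  apply/andP; split; rewrite /s in u1 u2 smd; rewrite mulrBl; lra.
- have [j [hj [z /andP[hz1 hz2]]]] := H a.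
  set s := j%:R * alpha + z%:~R - a.
  have s0 : 0 <= s by rewrite /s; lra.
  have sL : s < L by rewrite /s; lra.
  have /andP[u1 u2] := truncn_itv (divr_ge0 s0 (ltW d0)).
  set u := Num.trunc (s / d) in u1 u2 *.
  rewrite ler_pdivlMr // in u1; rewrite ltr_pdivrMr // in u2.
  have [mu|um] := leqP m u.
    exists (j + m * q)%N; split; first exact: hN.
    exists (z - m%:Z * p); rewrite shiftE Hq.
    have : m%:R * d <= u%:R * d by rewrite ler_pM2r // ler_nat.
    move=> h; apply/andP; split; rewrite /s in u1 u2 sL; lra.
  exists (j + u * q)%N; split; first exact: hN (ltnW um).
  exists (z - u%:Z * p); rewrite shiftE Hq.
  apply/andP; split; rewrite /s in u1 u2; rewrite ?natrS in u2; lra.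
Qed.

Lemma hits_monoN N N' L : hits N L -> (N <= N')%N -> hits N' L.
Proof. move=> H h a; have [j [hj hz]] := H a; exists j; split => //; exact: leq_trans h. Qed.

Lemma hits_monoL N L L' : hits N L -> L <= L' -> hits N L'.
Proof.
move=> H h a; have [j [hj [z /andP[h1 h2]]]] := H a; exists j; split => //.
exists z; apply/andP; split => //; lra.
Qed.

End Hits.

Section Density.
Variable (R : realType) (alpha : R).
Hypothesis a01 : 0 < alpha < 1.
Hypothesis irr : irrational alpha.

Lemma stage k : exists (N : nat) (L : R), hits alpha N L /\
  (N%:Z <= 4 * (q0 (st alpha k) + q1 (st alpha k)))%R /\
  t0 (st alpha k) <= L < 2 * t0 (st alpha k).
Proof.
elim: k => [|k [N [L [HN [HNq HL]]]]].
  exists 1%N, 1; split; last by split => //=; lra.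
  move=> a; exists 0%N; split => //; exists (Num.ceil a).
  have := ceil_itv a; rewrite rmorphB /= mul0r add0r; lra.
have [/andP[t1p t10] q1p q0p q01 _] := st_pos a01 irr k.
set d := t1 (st alpha k).
have {t1p}t1p : 0 < d := t1p.
have {t10}t10 : d < t0 (st alpha k) := t10.
set a := Num.floor (t0 (st alpha k) / d).
have /andP[ha1 ha2] := floor_itv (t0 (st alpha k) / d); rewrite -/a in ha1 ha2.
rewrite ler_pdivlMr // in ha1; rewrite ltr_pdivrMr // in ha2.
have /andP[u1 u2] := truncn_itv (divr_ge0 (ltW (lt_le_trans (lt_trans t1p t10) (proj1 (andP HL)))) (ltW t1p)).
set u := Num.trunc (L / d) in u1 u2.
rewrite ler_pdivlMr // in u1; rewrite ltr_pdivrMr // in u2.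
have {u1}u1 : u%:R * d <= L by [].
have {u2}u2 : L < u.+1%:R * d by [].
have u1' : (1 <= u)%N.
  rewrite lt0n; apply/eqP => u0; rewrite u0 mul1r in u2; case/andP: HL => HL1 HL2; by have := lt_le_trans (lt_trans u2 t10) HL1; rewrite ltxx.
have [sg [sg1 [_ E1]]] := st_sign alpha k.
have Hq : (absz (q1 (st alpha k)))%:R * alpha - (p1 (st alpha k))%:~R = d \/
          (absz (q1 (st alpha k)))%:R * alpha - (p1 (st alpha k))%:~R = - d.
  rewrite natr_absz ger0_norm; last by lia.
  by rewrite /d; case: sg1 E1 => -> ->; [right|left]; ring.
set m := u.-1.
have mu : m.+1 = u by rewrite /m prednK.
have hst := hits_step HN t1p Hq (m := m).
rewrite mu in hst.
exists (N + m * absz (q1 (st alpha k)))%N, (L - m%:R * d).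
split; first exact: hst.
have m2a : (m%:Z <= 2 * a)%R.
  have : m%:R + 1 < 2 * a%:~R + 1 + 1 :> R.
    rewrite natr1 mu.
    have : u%:R * d < (2 * a%:~R + 2) * d.
      case/andP: HL => _ h; rewrite rmorphD /= in ha2; lra.
    rewrite ltr_pM2r //; lra.
  move=> h; have : (m%:Z)%:~R < (2 * a + 1)%:~R :> R.
    rewrite rmorphD rmorphM /=; lra.
  rewrite ltr_int; lia.
split.
  rewrite /= -/d -/a !PoszD PoszM.
  have : ((absz (q1 (st alpha k)))%:Z = q1 (st alpha k)) by lia.
  move=> ->; nia.
rewrite /= -/d; apply/andP; split.
  have : m.+1%:R * d <= L by rewrite mu.
  rewrite -natr1; lra.
rewrite -mu -!natr1 in u2; lra.
Qed.

Lemma density : bounded_partial_quotients alpha ->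
  exists D : nat, exists M0 : nat, (1 <= D)%N /\ forall M : nat, (M0 <= M)%N ->
    hits alpha M (D%:R / M%:R).
Proof.
move=> /(aq_bound a01 irr) [Bn HB].
exists (8 * (Bn + 2))%N, 4%N; split; first by lia.
move=> M M4.
pose P k := (4 * (q0 (st alpha k) + q1 (st alpha k)) <= M%:Z)%R.
have P0 : exists k, P k by exists 0%N; rewrite /P /=; lia.
have Pb : forall k, P k -> (k <= M)%N.
  move=> k; have [_ _ _ _ h] := st_pos a01 irr k; rewrite /P; lia.
case: (ex_maxnP P0 Pb) => k Pk Pmax.
have Pk1 : ~~ P k.+1 by apply/negP => /Pmax; rewrite ltnn.
have [N [L [HN [HNq /andP[HL1 HL2]]]]] := stage k.
have [/andP[t1p t10] q1p q0p q01 _] := st_pos a01 irr k.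
have HBk := HB k.
have Mq : (M%:Z < 4 * (Bn%:Z + 2) * q1 (st alpha k))%R.
  move: Pk1; rewrite /P /= -/(aq alpha k) => h.
  have h' : (M%:Z < 4 * (q0 (st alpha k) + q1 (st alpha k) + aq alpha k * q1 (st alpha k)))%R by lia.
  nia.
have Mq' : M%:R < 4 * (Bn%:R + 2) * (q1 (st alpha k))%:~R :> R.
  have : (M%:Z)%:~R < (4 * (Bn%:Z + 2) * q1 (st alpha k))%:~R :> R by rewrite ltr_int.
  have Bp : (0:R) <= Bn%:R := ler0n _ _. move=> h; apply: (lt_le_trans h); rewrite !rmorphM !rmorphD /= !rmorph1 -pmulrn; apply: ler_pM; [| |lra|]; rewrite ?ler0z; try lia; try lra.
have det := st_det alpha k.
have h0 : 0 <= t1 (st alpha k) * (q0 (st alpha k))%:~R.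
  by apply: mulr_ge0; [exact: ltW | rewrite ler0z].
have hq : t0 (st alpha k) * (q1 (st alpha k))%:~R <= 1 by lra.
have M0 : 0 < M%:R :> R by rewrite ltr0n; lia.
apply: (@hits_monoL _ _ _ L).
  apply: (hits_monoN HN); move: Pk; rewrite /P; lia.
rewrite ler_pdivlMr // natrM natrD.
have q1r : 0 <= (q1 (st alpha k))%:~R :> R by rewrite ler0z; lia.
have t0p : 0 < t0 (st alpha k) by exact: lt_trans t10.
have : L * M%:R <= 2 * t0 (st alpha k) * (4 * (Bn%:R + 2) * (q1 (st alpha k))%:~R).
  apply: ler_pM; [lra | lra | lra | lra].
move=> h; have : 2 * t0 (st alpha k) * (4 * (Bn%:R + 2) * (q1 (st alpha k))%:~R) <= 8%:R * (Bn%:R + 2%:R).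
  have -> : 2 * t0 (st alpha k) * (4 * (Bn%:R + 2) * (q1 (st alpha k))%:~R) = 8 * (Bn%:R + 2) * (t0 (st alpha k) * (q1 (st alpha k))%:~R) by ring.
  have Bp : 0 <= Bn%:R :> R by [].
  rewrite -[8%:R]/8 -[2%:R]/2; nra.
lra.
Qed.

End Density.
Section Word.
Variable (R : realType) (alpha rho : R) (conv : bool).
Hypothesis a01 : 0 < alpha < 1.

Definition Fc (x : R) : int := if conv then Num.ceil x else Num.floor x.
Definition cb : int := if conv then 1 else 0.

Lemma intS (m : int) : (m + 1)%:~R = m%:~R + 1 :> R.
Proof. by rewrite intrD. Qed.

Lemma Fc_in x (n : int) : 0 < x + n%:~R < 1 -> Fc x = - n + cb.
Proof.
move=> /andP[h1 h2]; rewrite /Fc /cb; case: conv.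
  apply: ceil_def; rewrite addrK intS rmorphN /=; apply/andP; split; lra.
rewrite addr0; apply: floor_def; rewrite intS rmorphN /=; apply/andP; split; lra.
Qed.

Lemma Fc_step x : Fc (x + alpha) - Fc x =
  if (if conv then asbool ((0 < Defs.frac x) && (Defs.frac x <= 1 - alpha))
      else asbool ((0 <= Defs.frac x) && (Defs.frac x < 1 - alpha))) then 0 else 1.
Proof.
rewrite !asboolb /Defs.frac.
have /andP[f1 f2] := floor_itv x.
pose n := Num.floor x; have En : Num.floor x = n by [].
rewrite En in f1 f2 *; clearbody n.
rewrite intS in f2.
case/andP: a01 => a0 a1.
rewrite /Fc; case: conv.
- have [f0|f0] := eqVneq (x - n%:~R) 0.
    rewrite f0 ltxx /=.
    have E1 : Num.ceil x = n by apply: ceil_def; rewrite intrB /=; apply/andP; split; lra.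
    have E2 : Num.ceil (x + alpha) = n + 1 by apply: ceil_def; rewrite addrK intS; apply/andP; split; lra.
    by rewrite E1 E2 addrAC subrr add0r.
  have fp : 0 < x - n%:~R by rewrite lt0r f0 /=; lra.
  have E1 : Num.ceil x = n + 1 by apply: ceil_def; rewrite addrK intS; apply/andP; split; lra.
  rewrite fp /= E1.
  have [h|h] := lerP (x - n%:~R) (1 - alpha).
    have E2 : Num.ceil (x + alpha) = n + 1 by apply: ceil_def; rewrite addrK intS; apply/andP; split; lra.
    by rewrite E2 subrr.
  have E2 : Num.ceil (x + alpha) = n + 1 + 1 by apply: ceil_def; rewrite addrK !intS; apply/andP; split; lra.
  by rewrite E2 addrAC subrr add0r.
- have -> : 0 <= x - n%:~R by lra.
  rewrite /=.
  have [h|h] := ltrP (x - n%:~R) (1 - alpha).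
    have E2 : Num.floor (x + alpha) = n by apply: floor_def; rewrite intS; apply/andP; split; lra.
    by rewrite E2 En subrr.
  have E2 : Num.floor (x + alpha) = n + 1 by apply: floor_def; rewrite !intS; apply/andP; split; lra.
  by rewrite E2 En addrAC subrr add0r.
Qed.

Lemma letter_step m : Fc (rho + m.+1%:R * alpha) - Fc (rho + m%:R * alpha) =
  if sturmian alpha rho conv m then 0 else 1.
Proof.
have -> : rho + m.+1%:R * alpha = (rho + m%:R * alpha) + alpha by rewrite -natr1; ring.
exact: Fc_step.
Qed.

Lemma cnt i l : (count_mem false [seq sturmian alpha rho conv (i + j)%N | j <- iota 0 l])%:Z
  = Fc (rho + (i + l)%:R * alpha) - Fc (rho + i%:R * alpha).
Proof.
elim: l => [|l IH]; first by rewrite addn0 subrr.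
rewrite -addn1 iotaD map_cat count_cat PoszD IH addn1 addnS /= addn0.
have := letter_step (i + l).
case: (sturmian alpha rho conv (i + l)) => /= h; lia.
Qed.


Local Notation w := (sturmian alpha rho conv).

Lemma cnt_val i l : ((count_mem false [seq w (i + j)%N | j <- iota 0 l])%:Z)
  = Fc (rho + (i + l)%:R * alpha) - Fc (rho + i%:R * alpha).
Proof. exact: cnt. Qed.

Lemma fac_abelian (i k : nat) (z Z : int) :
  0 < rho + i%:R * alpha + Z%:~R < 1/2 -> 0 <= k%:R * alpha + z%:~R < 1/4 ->
  abelian_square [seq w (i + j)%N | j <- iota 0 (k + k)].
Proof.
move=> /andP[y1 y2] /andP[t1 t2].
exists [seq w (i + j)%N | j <- iota 0 k], [seq w ((i + k) + j)%N | j <- iota 0 k].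
split.
  rewrite iotaD map_cat; congr (_ ++ _).
  rewrite add0n -[k in iota k]addn0 iotaDl -map_comp; apply: eq_map => j /=.
  by rewrite addnA.
have E0 : Fc (rho + i%:R * alpha) = - Z + cb by apply: Fc_in; apply/andP; split; lra.
have E1 : Fc (rho + (i + k)%:R * alpha) = - (Z + z) + cb.
  apply: Fc_in; rewrite natrD intrD.
  have -> : rho + (i%:R + k%:R) * alpha + (Z%:~R + z%:~R) =
     (rho + i%:R * alpha + Z%:~R) + (k%:R * alpha + z%:~R) by ring.
  apply/andP; split; lra.
have E2 : Fc (rho + (i + k + k)%:R * alpha) = - (Z + z + z) + cb.
  apply: Fc_in; rewrite !natrD !intrD.
  have -> : rho + (i%:R + k%:R + k%:R) * alpha + (Z%:~R + z%:~R + z%:~R) =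
     (rho + i%:R * alpha + Z%:~R) + (k%:R * alpha + z%:~R) + (k%:R * alpha + z%:~R) by ring.
  apply/andP; split; lra.
have C1 := cnt_val i k.
have C2 := cnt_val (i + k) k.
rewrite E0 E1 in C1; rewrite E1 E2 in C2.
have Cf : count_mem false [seq w (i + j)%N | j <- iota 0 k] =
          count_mem false [seq w (i + k + j)%N | j <- iota 0 k] by lia.
case=> //.
have ct (s : seq bool) : count_mem true s = (size s - count_mem false s)%N.
  by elim: s => [|[] s IH] //=; rewrite IH ?add1n ?add0n ?subSn ?count_size.
by rewrite !ct Cf !size_map.
Qed.


Lemma fac_distinct (M : nat) (g : R) (i i' k : nat) (Z Z' : int) :
  hits alpha M g -> (M <= (k + k).+1)%N ->
  0 < rho + i%:R * alpha + Z%:~R -> rho + i'%:R * alpha + Z'%:~R < 1 ->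
  rho + i%:R * alpha + Z%:~R + g < rho + i'%:R * alpha + Z'%:~R ->
  [seq w (i + j)%N | j <- iota 0 (k + k)] != [seq w (i' + j)%N | j <- iota 0 (k + k)].
Proof.
move=> H HM y0 y1 yy; apply/eqP => E.
have [j [hj [zl /andP[h1 h2]]]] := H (- (rho + i'%:R * alpha + Z'%:~R) +
   ((rho + i'%:R * alpha + Z'%:~R) - (rho + i%:R * alpha + Z%:~R) - g) / 2).
have jk : (j <= k + k)%N by move: hj HM; lia.
have Ej : take j [seq w (i + j)%N | j <- iota 0 (k + k)] = take j [seq w (i' + j)%N | j <- iota 0 (k + k)] by rewrite E.
rewrite -!map_take take_iota (minn_idPl jk) in Ej.
have C1 := cnt_val i j; have C2 := cnt_val i' j.
rewrite Ej in C1; rewrite C2 in C1.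
have E0 : Fc (rho + i%:R * alpha) = - Z + cb by apply: Fc_in; apply/andP; split; lra.
have E0' : Fc (rho + i'%:R * alpha) = - Z' + cb.
  apply: Fc_in; apply/andP; split; lra.
have E1 : Fc (rho + (i' + j)%:R * alpha) = - (Z' + zl) + cb.
  apply: Fc_in; rewrite natrD intrD.
  have -> : rho + (i'%:R + j%:R) * alpha + (Z'%:~R + zl%:~R) =
     (rho + i'%:R * alpha + Z'%:~R) + (j%:R * alpha + zl%:~R) by ring.
  apply/andP; split; lra.
have E2 : Fc (rho + (i + j)%:R * alpha) = - (Z + zl + 1) + cb.
  apply: Fc_in; rewrite natrD !intrD.
  have -> : rho + (i%:R + j%:R) * alpha + (Z%:~R + zl%:~R + 1%:~R) =
     (rho + i%:R * alpha + Z%:~R) + (j%:R * alpha + zl%:~R) + 1 by ring.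
  apply/andP; split; lra.
rewrite E0 E0' E1 E2 in C1; lia.
Qed.


Lemma fac_proof (i n : nat) : size [seq w (i + j)%N | j <- iota 0 n] == n.
Proof. by rewrite size_map size_iota. Qed.

Definition fac (i n : nat) : n.-tuple letter := Tuple (fac_proof i n).

Lemma asf_lower (D M0 : nat) : (1 <= D)%N ->
  (forall M : nat, (M0 <= M)%N -> hits alpha M (D%:R / M%:R)) ->
  forall (k : nat) (z : int), (M0 <= (k + k).+1)%N -> 0 <= k%:R * alpha + z%:~R < 1/4 ->
  ((k + k).+1 %/ (4 * D) <= ASF w (k + k))%N.
Proof.
move=> D1 Hd k z kM hz.
have HM := Hd _ kM.
have Mp : 0 < (k + k).+1%:R :> R by rewrite ltr0n.
have Dp : 0 < D%:R :> R by rewrite ltr0n.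
pose g : R := D%:R / (k + k).+1%:R; have gE : g = D%:R / (k + k).+1%:R by [].
rewrite -gE in HM; clearbody g.
have gM : g * (k + k).+1%:R = D%:R by rewrite gE mulfVK // gt_eqF.
have gp : 0 < g by rewrite gE divr_gt0.
have rle := leq_trunc_div (k + k).+1 (4 * D).
pose r := ((k + k).+1 %/ (4 * D))%N; rewrite -/r in rle *; clearbody r.
have rg : 4 * r%:R * g <= 1.
  have : (r * (4 * D))%:R <= (k + k).+1%:R :> R by rewrite ler_nat.
  rewrite !natrM -gM => h.
  have : 4 * r%:R * g * D%:R <= 1 * D%:R by rewrite mul1r; nra.
  by rewrite ler_pM2r.
have pick : forall s : 'I_r, exists iZ : nat * int,
   (2 * s%:R + 1) * g <= rho + iZ.1%:R * alpha + iZ.2%:~R < (2 * s%:R + 2) * g.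
  move=> s; have [j [_ [zz /andP[h1 h2]]]] := HM ((2 * s%:R + 1) * g - rho).
  by exists (j, zz) => /=; apply/andP; split; lra.
have [f Hf] := choice pick.
have Hy s : 0 < rho + (f s).1%:R * alpha + (f s).2%:~R < 1/2.
  have := Hf s; have := ltn_ord s; rewrite -(ltr_nat R) => hs /andP[h1 h2].
  have hs' : s%:R + 1 <= r%:R :> R by rewrite natr1 ler_nat.
  have s0 : 0 <= s%:R :> R by [].
  apply/andP; split; nra.
have key (u v : 'I_r) : (u < v)%N ->
    [seq w ((f u).1 + j)%N | j <- iota 0 (k + k)] != [seq w ((f v).1 + j)%N | j <- iota 0 (k + k)].
  move=> uv; apply: (fac_distinct (Z := (f u).2) (Z' := (f v).2) HM (leqnn _)).
  - by have /andP[h _] := Hy u.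
  - by have /andP[_ h] := Hy v; lra.
  have /andP[_ hu] := Hf u; have /andP[hv _] := Hf v.
  have : u%:R + 1 <= v%:R :> R by rewrite natr1 ler_nat.
  move=> h; nra.
pose T (s : 'I_r) := fac (f s).1 (k + k).
have Tinj : injective T.
  move=> s s' E.
  have Ev : [seq w ((f s).1 + j)%N | j <- iota 0 (k + k)] = [seq w ((f s').1 + j)%N | j <- iota 0 (k + k)].
    by have := congr1 val E.
  apply/eqP; apply/negPn/negP => ne.
  case: (ltngtP s s') => h.
  - by move/eqP: (key _ _ h); rewrite Ev.
  - by move/eqP: (key _ _ h); rewrite Ev.
  - by move: ne; rewrite (val_inj h) eqxx.
rewrite -[X in (X <= _)%N]card_ord -(card_imset _ Tinj).
apply: subset_leq_card; apply/subsetP => t /imsetP [s _ ->].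
rewrite inE asboolE; split.
  by exists (f s).1; rewrite size_tuple.
exact: (fac_abelian (Hy s) hz).
Qed.

End Word.

Unset Implicit Arguments. Set Strict Implicit.

Theorem theorem3 (R : realType) (alpha rho : R) (conv : bool) :
  0 < alpha < 1 -> (@irrational R alpha) -> bounded_partial_quotients alpha ->
  0 <= rho < 1 ->
  exists C : R, 0 < C /\
    exists N : nat, forall n : nat, (N <= n)%N ->
      C * n%:R ^+ 2 <= (\sum_(m < n.+1) ASF (sturmian alpha rho conv) m)%:R.
Proof.
move=> a01 irr bpq rho01.
have [D [M0 [D1 Hd]]] := density a01 irr bpq.
exists ((4 * (16 * D) * (16 * D))%:R^-1); split.
  by rewrite invr_gt0 ltr0n !muln_gt0 D1.
exists (4 * M0 + 4 + 32 * D)%N => n nN.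
pose K := (n %/ 4)%N; have KE : K = (n %/ 4)%N by []; clearbody K.
have MK : (M0 <= K)%N by rewrite KE; lia.
have K4 : (4 * K <= n)%N by rewrite KE; lia.
have K1 : (1 <= K)%N by rewrite KE; lia.
have HK := Hd K MK.
have Kp : 0 < K%:R :> R by rewrite ltr0n.
have Dp : 0 < D%:R :> R by rewrite ltr0n.
pose g : R := D%:R / K%:R; have gE : g = D%:R / K%:R by [].
rewrite -gE in HK; clearbody g.
have gK : g * K%:R = D%:R by rewrite gE mulfVK // gt_eqF.
have gp : 0 < g by rewrite gE divr_gt0.
have rle := leq_trunc_div K (4 * D).
pose r := (K %/ (4 * D))%N; have rE : r = (K %/ (4 * D))%N by []; rewrite -rE in rle; clearbody r.
have rg : 4 * r%:R * g <= 1.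
  have : (r * (4 * D))%:R <= K%:R :> R by rewrite ler_nat.
  rewrite !natrM -gK => h.
  have : 4 * r%:R * g * D%:R <= 1 * D%:R by rewrite mul1r; nra.
  by rewrite ler_pM2r.
have pick : forall s : 'I_r, exists jz : nat * int, (jz.1 < K)%N /\
   s%:R * g <= (K + jz.1)%:R * alpha + jz.2%:~R < (s%:R + 1) * g.
  move=> s; have [j [hj [zz /andP[h1 h2]]]] := HK (s%:R * g - K%:R * alpha).
  exists (j, zz) => /=; split => //; rewrite natrD; apply/andP; split; lra.
have [f Hf] := choice pick.

have bnd (u : 'I_r) : (u%:R + 1) * g <= 1 / 4.
  have hs' : u%:R + 1 <= r%:R :> R by rewrite natr1 ler_nat.
  have : (u%:R + 1) * g <= r%:R * g by rewrite ler_pM2r.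
  lra.
have Hgood s : 0 <= (K + (f s).1)%:R * alpha + (f s).2%:~R < 1 / 4.
  have [_ /andP[h1 h2]] := Hf s.
  have p1 : 0 <= s%:R * g by apply: mulr_ge0 => //; exact: ltW.
  have bs := bnd s.
  apply/andP; split; lra.
have Hasf s : (r <= ASF (sturmian alpha rho conv) ((K + (f s).1) + (K + (f s).1)))%N.
  apply: leq_trans (asf_lower rho conv a01 D1 Hd _ (Hgood s)); last by lia.
  by rewrite rE leq_div2r //; lia.
have kinj s s' : (K + (f s).1)%N = (K + (f s').1)%N -> s = s'.
  move=> E.
  have [_ /andP[h1 h2]] := Hf s; have [_ /andP[h1' h2']] := Hf s'.
  rewrite E in h1 h2.
  have zE : (f s).2 = (f s').2.
    have bs := bnd s; have bs' := bnd s'.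
    have p1 : 0 <= s%:R * g by apply: mulr_ge0 => //; exact: ltW.
    have p2 : 0 <= s'%:R * g by apply: mulr_ge0 => //; exact: ltW.
    rewrite mulrDl mul1r in bs bs' h2 h2'.
    have c1 : (f s).2%:~R - (f s').2%:~R < 1 :> R by lra.
    have c2 : (f s').2%:~R - (f s).2%:~R < 1 :> R by lra.
    have d1 : ((f s).2 - (f s').2 < 1)%R by rewrite -(ltr_int R) intrB rmorph1.
    have d2 : ((f s').2 - (f s).2 < 1)%R by rewrite -(ltr_int R) intrB rmorph1.
    by clear -d1 d2; lia.
  rewrite zE in h1 h2.
  apply: val_inj; apply/eqP; rewrite eqn_leq.
  have a1 : s%:R < s'%:R + 1 :> R by rewrite -(ltr_pM2r gp); lra.
  have a2 : s'%:R < s%:R + 1 :> R by rewrite -(ltr_pM2r gp); lra.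
  move: a1 a2; rewrite !natr1 !ltr_nat !ltnS => -> ->; done.
pose h (s : 'I_r) : 'I_n.+1 := inord ((K + (f s).1) + (K + (f s).1)).
have hval s : (h s : nat) = ((K + (f s).1) + (K + (f s).1))%N.
  rewrite /h inordK //; have [hj _] := Hf s; clear -hj K4; lia.
have hinj : injective h.
  move=> s s' E; apply: kinj; have := congr1 (@nat_of_ord _) E; rewrite !hval; clear; lia.
have Hh s : (r <= ASF (sturmian alpha rho conv) (h s))%N.
  rewrite hval; exact: Hasf.
clearbody h.
have Hsum : (r * r <= \sum_(m < n.+1) ASF (sturmian alpha rho conv) m)%N.
  rewrite (bigID (mem (h @: setT))) /=; apply: leq_trans (leq_addr _ _).
  rewrite big_imset /=; last by move=> x y _ _; exact: hinj.
  have : (\sum_(i in [set: 'I_r]) r <= \sum_(i in [set: 'I_r]) ASF (sturmian alpha rho conv) (h i))%N.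
    by apply: leq_sum => i _; exact: Hh.
  by rewrite sum_nat_const cardsT card_ord.
have rE2 : r = (n %/ (16 * D))%N by rewrite rE KE -divnMA mulnA.
have e1 := divn_eq n (16 * D).
have e2 : (n %% (16 * D) < 16 * D)%N by rewrite ltn_pmod // muln_gt0 D1.
rewrite -rE2 in e1.
have nr : (n <= 2 * (16 * D) * r)%N.
  clear -e1 e2 nN D1; nia.
have nr2 : (n * n <= r * r * (4 * (16 * D) * (16 * D)))%N.
  clear -nr; nia.
apply: le_trans (_ : (r * r)%:R <= _); last by rewrite ler_nat.
rewrite expr2 -natrM mulrC ler_pdivrMr; last by rewrite ltr0n !muln_gt0 D1.
by rewrite -natrM ler_nat.
Qed.
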